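(* There is no Steiner triple system of order $v>3$ whose $2$-rank is less than $v$ and whose $3$-rank is less than $v-1$.
   Context: A Steiner triple system of order $v$ on $\{1,\ldots,v\}$ is a collection of 3-subsets (blocks) such that every 2-subset is contained in exactly one block. For a prime $p$, the $p$-rank of such a system is the dimension of the $\mathrm{GF}(p)$-linear span of the characteristic vectors of its blocks in $\mathrm{GF}(p)^v$. *)

(* Defs.v *)
From HB Require Import structures.
From mathcomp Require Import all_boot all_order all_algebra.
Set Implicit Arguments. Unset Strict Implicit. Unset Printing Implicit Defensive.
Import GRing.Theory.
Local Open Scope ring_scope.

(* Points {1,...,v} are represented by 'I_v; blocks are subsets of 'I_v. *)
Definition is_STS (v : nat) (B : {set {set 'I_v}}) : Prop :=
  (forall b, b \in B -> #|b| = 3%N) /\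
  (forall S : {set 'I_v}, #|S| = 2%N -> #|[set b in B | S \subset b]| = 1%N).

Definition char_vec (p v : nat) (b : {set 'I_v}) : 'rV['F_p]_v :=
  \row_(i < v) ((i \in b)%:R : 'F_p).

Definition p_rank (p v : nat) (B : {set {set 'I_v}}) : nat :=
  \rank (\sum_(b in B) <<char_vec p b>>)%MS.

(* Main.v *)
Require Import Defs.
From mathcomp Require Import all_boot all_order all_algebra.
From mathcomp Require Import ring zify.
Set Implicit Arguments. Unset Strict Implicit. Unset Printing Implicit Defensive.
Import GRing.Theory.
Local Open Scope ring_scope.

Lemma f2a (a : 'F_2) : a != 0 -> a = 1.
Proof. case: a => [[|[|//]]] H //= _; exact: val_inj. Qed.
Lemma f2b : (1 + 1 : 'F_2) = 0. Proof. by apply: val_inj. Qed.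
Lemma f2c : (-(1 + 1) : 'F_2) = 0. Proof. by apply: val_inj. Qed.
Lemma f3a (a b : 'F_3) : -(a + b) = a -> a = b.
Proof. case: a => [[|[|[|//]]]] Ha; case: b => [[|[|[|//]]]] Hb; move/(congr1 val) => //= _; exact: val_inj. Qed.
Lemma f3b (a : 'F_3) : -(a + a) = a.
Proof. case: a => [[|[|[|//]]]] Ha; exact: val_inj. Qed.

Lemma inj_card (T1 T2 : finType) (A : {set T1}) (C : {set T2}) (f : T1 -> T2) :
  {in A &, injective f} -> (forall x, x \in A -> f x \in C) -> (#|A| <= #|C|)%N.
Proof.
move=> inj fA; rewrite -(card_in_imset inj); apply: subset_leq_card.
by apply/subsetP => y /imsetP [x xA ->]; apply: fA.
Qed.

Definition blk v (B : {set {set 'I_v}}) (a b : 'I_v) : {set 'I_v} :=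
  odflt set0 [pick bl in B | (a \in bl) && (b \in bl)].
Definition third v (B : {set {set 'I_v}}) (a b : 'I_v) : 'I_v :=
  odflt a [pick c in blk B a b | (c != a) && (c != b)].

Lemma sts_uniq v (B : {set {set 'I_v}}) a b bl1 bl2 : is_STS B -> a != b ->
  bl1 \in B -> a \in bl1 -> b \in bl1 -> bl2 \in B -> a \in bl2 -> b \in bl2 -> bl1 = bl2.
Proof.
move=> [_ H] ab B1 a1 b1 B2 a2 b2.
have /eqP/cards1P [x Hx] : #|[set bl in B | [set a; b] \subset bl]| = 1%N.
  by apply: H; rewrite cards2 ab.
have mem bl : bl \in B -> a \in bl -> b \in bl -> bl = x.
  move=> Bb ab' bb; apply/set1P; rewrite -Hx inE Bb /= subUset !sub1set ab' bb.
  by [].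
by rewrite (mem _ B1 a1 b1) (mem _ B2 a2 b2).
Qed.

Lemma blk_in v (B : {set {set 'I_v}}) a b : is_STS B -> a != b ->
  [/\ blk B a b \in B, a \in blk B a b & b \in blk B a b].
Proof.
move=> [_ H] ab.
have /eqP/cards1P [x Hx] : #|[set bl in B | [set a; b] \subset bl]| = 1%N.
  by apply: H; rewrite cards2 ab.
rewrite /blk; case: pickP => [bl /andP[Bb /andP[ab1 bb1]] | /(_ x) Hn] //=.
have : x \in [set bl in B | [set a; b] \subset bl] by rewrite Hx set11.
by rewrite inE subUset !sub1set Hn.
Qed.

Lemma rest1 v (bl : {set 'I_v}) a b : #|bl| = 3%N -> a \in bl -> b \in bl -> a != b ->
  #|bl :\ a :\ b| = 1%N.
Proof.
move=> c3 abl bbl ab.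
have := cardsD1 a bl; have := cardsD1 b (bl :\ a).
rewrite !inE eq_sym ab abl bbl c3 /=; lia.
Qed.

Lemma third_spec v (B : {set {set 'I_v}}) a b : is_STS B -> a != b ->
  [/\ third B a b \in blk B a b, third B a b != a & third B a b != b].
Proof.
move=> hS ab; have [bB ab1 bb1] := blk_in hS ab.
have /eqP/cards1P [x Hx] := rest1 (hS.1 _ bB) ab1 bb1 ab.
have : x \in blk B a b :\ a :\ b by rewrite Hx set11.
rewrite !inE => /and3P [xb xa xbl].
rewrite /third; case: pickP => [c /andP [cbl /andP [ca cb]] | /(_ x)] /=.
  by rewrite cbl ca cb.
by rewrite xbl xa xb.
Qed.

Lemma third_blk v (B : {set {set 'I_v}}) bl a b c : is_STS B -> bl \in B ->
  a \in bl -> b \in bl -> c \in bl -> a != b -> c != a -> c != b -> third B a b = c.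
Proof.
move=> hS bB abl bbl cbl ab ca cb.
have [bB' ab1 bb1] := blk_in hS ab.
have E := sts_uniq hS ab bB abl bbl bB' ab1 bb1.
have [t1 ta tb] := third_spec hS ab.
have /eqP/cards1P [x Hx] := rest1 (hS.1 _ bB) abl bbl ab.
have : c \in bl :\ a :\ b by rewrite !inE ca cb cbl.
have : third B a b \in bl :\ a :\ b by rewrite !inE ta tb E t1.
by rewrite Hx !inE => /eqP -> /eqP ->.
Qed.

Lemma blk_sum v (B : {set {set 'I_v}}) (R : zmodType) (f : 'I_v -> R) a b :
  is_STS B -> a != b ->
  \sum_(i in blk B a b) f i = f a + f b + f (third B a b).
Proof.
move=> hS ab; have [bB ab1 bb1] := blk_in hS ab.
have [t1 ta tb] := third_spec hS ab.
have E : blk B a b :\ a :\ b = [set third B a b].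
  have /eqP/cards1P [x Hx] := rest1 (hS.1 _ bB) ab1 bb1 ab.
  have : third B a b \in blk B a b :\ a :\ b by rewrite !inE ta tb t1.
  by rewrite Hx => /set1P ->.
rewrite (big_setD1 a ab1) (big_setD1 b) ?inE ?(eq_sym b) ?ab ?bb1 //= E big_set1 addrA.
by [].
Qed.

Lemma val_third v (B : {set {set 'I_v}}) (R : zmodType) (f : 'I_v -> R) a b :
  is_STS B -> a != b ->
  (forall bl, bl \in B -> \sum_(i in bl) f i = 0) -> f (third B a b) = -(f a + f b).
Proof.
move=> hS ab H; have [bB _ _] := blk_in hS ab.
have := H _ bB; rewrite blk_sum // => E.
by apply/eqP; rewrite -addr_eq0 addrC E.
Qed.

Lemma third_inv v (B : {set {set 'I_v}}) a b : is_STS B -> a != b ->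
  third B a (third B a b) = b.
Proof.
move=> hS ab; have [bB ab1 bb1] := blk_in hS ab; have [t1 ta tb] := third_spec hS ab.
by apply: (third_blk hS bB) => //; rewrite eq_sym.
Qed.

Lemma comb v (B : {set {set 'I_v}}) (h : 'I_v -> 'F_2) (g : 'I_v -> 'F_3) p0 j1 j2 :
  (3 < v)%N -> is_STS B ->
  (forall bl, bl \in B -> \sum_(i in bl) h i = 0) ->
  (forall bl, bl \in B -> \sum_(i in bl) g i = 0) ->
  h p0 != 0 -> g j1 != g j2 -> False.
Proof.
move=> v3 hS Hh Hg hp0 gj.
pose t := third B.
have hT a b : a != b -> h (t a b) = -(h a + h b) by move=> ab; apply: val_third.
have gT a b : a != b -> g (t a b) = -(g a + g b) by move=> ab; apply: val_third.
have tinv a b : a != b -> t a (t a b) = b by move=> ab; apply: third_inv.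
have tne a b : a != b -> (t a b != a) && (t a b != b).
  by move=> ab; have [_ -> ->] := third_spec hS ab.
have tinj a x y : x != a -> y != a -> t a x = t a y -> x = y.
  by move=> xa ya E; rewrite -(tinv a x) 1?eq_sym // E tinv // eq_sym.
have hp1 : h p0 = 1 by exact: f2a.
have hne x y : h x != h y -> x != y by move=> H; apply: contraNneq H => ->.
have gne x y : g x != g y -> x != y by move=> H; apply: contraNneq H => ->.
have h10 : (1 : 'F_2) != 0 by rewrite oner_eq0.
have h0 x : h x != 1 -> h x = 0.
  by move=> H; apply/eqP; apply: contraNT H => /f2a ->.
pose S := [set x | h x == 1]; pose T := [set x | h x == 0].
have hA : (#|T| < #|S|)%N.
  have : (#|T| <= #|S :\ p0|)%N.
    apply: (@inj_card _ _ _ _ (t p0)).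
    - move=> x y; rewrite !inE => /eqP hx /eqP hy; apply: tinj.
      + by apply: hne; rewrite hx hp1 eq_sym.
      + by apply: hne; rewrite hy hp1 eq_sym.
    - move=> x; rewrite !inE => /eqP hx.
      have xp : p0 != x by apply: hne; rewrite hx hp1.
      have /andP [-> _] := tne _ _ xp.
      by rewrite hT // hx hp1 addr0; apply/eqP; apply: val_inj.
  by rewrite (cardsD1 p0 S) inE hp1 eqxx.
case: (boolP [exists p, exists q, [&& g p == g q, h p == 1 & h q == 0]]).
  case/existsP => p /existsP [q /and3P [/eqP gpq /eqP hp /eqP hq]].
  have phiP a b x : g a = g b -> h a = 1 -> h b = 0 -> g x != g a ->
      [/\ a != x, t a x != b, g (t b (t a x)) = g x & h (t b (t a x)) = h x + 1].
    move=> gab ha hb gx.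
    have ax : a != x by apply: gne; rewrite eq_sym.
    have ub : t a x != b.
      apply: gne; rewrite gT // -gab; apply/eqP => /f3a E; move: gx.
      by rewrite E eqxx.
    split => //.
      by rewrite (gT b) 1?eq_sym // gT // gab; ring.
    by rewrite (hT b) 1?eq_sym // hT // ha hb; ring.
  have phiI a b x y : g a = g b -> h a = 1 -> h b = 0 -> g x != g a -> g y != g a ->
      t b (t a x) = t b (t a y) -> x = y.
    move=> gab ha hb gx gy E.
    have [ax ub _ _] := phiP a b x gab ha hb gx.
    have [ay vb _ _] := phiP a b y gab ha hb gy.
    move/(tinj _ _ _ ub vb): E; apply: tinj; by rewrite eq_sym.
  have [y gy] : exists y, g y != g p.
    case: (eqVneq (g j1) (g p)) => E; last by exists j1.
    by exists j2; rewrite -E eq_sym.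
  have [_ _ gy' hy'] := phiP p q y gpq hp hq gy.
  have [p' [q' [gpq' hp' hq' gp']]] :
      exists p' q', [/\ g p' = g q', h p' = 1, h q' = 0 & g p' != g p].
    case: (eqVneq (h y) 1) => hy.
      exists y, (t q (t p y)); split.
      - by rewrite gy'.
      - exact: hy.
      - by rewrite hy' hy f2b.
      - exact: gy.
    have hy0 : h y = 0 by apply: h0.
    exists (t q (t p y)), y; split.
    - exact: gy'.
    - by rewrite hy' hy0 add0r.
    - exact: hy0.
    - by rewrite gy'.
  pose phi x := if g x == g p then t q' (t p' x) else t q (t p x).
  have gpp : g p != g p' by rewrite eq_sym.
  have phiv x : g (phi x) = g x /\ h (phi x) = h x + 1.
    rewrite /phi; case: ifP => /eqP gx.
      have gx' : g x != g p' by rewrite gx.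
      have [_ _ -> ->] := phiP p' q' x gpq' hp' hq' gx'.
      by [].
    have gx' : g x != g p by apply/eqP.
    have [_ _ -> ->] := phiP p q x gpq hp hq gx'.
    by [].
  have : (#|S| <= #|T|)%N.
    apply: (@inj_card _ _ _ _ phi).
      move=> x z _ _ E.
      have gxz : g x = g z by rewrite -(phiv x).1 E (phiv z).1.
      move: E; rewrite /phi -gxz; case: ifP => /eqP gx.
        move=> E; apply: (phiI p' q' x z gpq' hp' hq' _ _ E).
          by rewrite gx.
        by rewrite -gxz gx.
      move=> E; apply: (phiI p q x z gpq hp hq _ _ E).
        by apply/eqP.
      by rewrite -gxz; apply/eqP.
    move=> x; rewrite !inE (phiv x).2 => /eqP ->; rewrite f2b.
    by [].
  by rewrite leqNgt hA.
move=> nmix.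
have nm a b : g a = g b -> h a = 1 -> h b = 1.
  move=> gab ha; apply: f2a; apply/eqP => hb; move/negP: nmix; apply.
  by apply/existsP; exists a; apply/existsP; exists b; rewrite gab ha hb !eqxx.
have single x : g x = g p0 -> x = p0.
  move=> gx; case: (eqVneq x p0) => // xp.
  have px : p0 != x by rewrite eq_sym.
  have gr : g (t p0 x) = g p0 by rewrite gT // gx f3b.
  have hx : h x = 1 by apply: (nm p0) => //.
  have := nm p0 (t p0 x) (esym gr) hp1.
  by rewrite hT // hx hp1 f2c => /eqP; rewrite eq_sym oner_eq0.
have ginj : injective g.
  move=> x y gxy; case: (eqVneq x y) => // xy.
  case: (eqVneq (g x) (g p0)) => gx0.
    by rewrite (single x gx0) (single y) // -gxy.
  have px : p0 != x by apply: gne; rewrite eq_sym.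
  pose z := t p0 x.
  have gz : g z = -(g p0 + g x) by rewrite gT.
  have yz : y != z.
    apply: gne; rewrite gz -gxy; apply/eqP => E.
    rewrite addrC in E; move: gx0; rewrite (f3a (esym E)) eqxx.
    by [].
  have gw : g (t y z) = g p0 by rewrite gT // gz -gxy; ring.
  have w0 := single _ gw.
  have [bB yb zb] := blk_in hS yz.
  have [wb _ _] := third_spec hS yz.
  have /andP [zp _] := tne _ _ px.
  have : t p0 z = y.
    apply: (third_blk hS bB) => //.
    - by rewrite -w0.
    - by rewrite eq_sym.
    - by apply: gne; rewrite -gxy.
  by rewrite /z tinv.
have := leq_card g ginj; rewrite card_ord card_Fp //.
by rewrite leqNgt v3.
Qed.

Lemma ker_sum (p v : nat) (B : {set {set 'I_v}}) (i : 'I_v) (bl : {set 'I_v}) :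
  bl \in B ->
  \sum_(j in bl) (kermx (\sum_(b in B) <<char_vec p b>>)%MS^T) i j = 0.
Proof.
move=> bB; set M := (\sum_(b in B) <<char_vec p b>>)%MS.
have : (char_vec p bl <= M)%MS by apply: (sumsmx_sup bl) => //; rewrite genmxE.
case/submxP => D E.
have : (row i (kermx M^T) *m (char_vec p bl)^T) 0 0 = 0.
  by rewrite E trmx_mul mulmxA -row_mul mulmx_ker row0 mul0mx mxE.
move=> H; apply: etrans H; rewrite mxE.
rewrite big_mkcond /=; apply: eq_bigr => j _; rewrite /char_vec !mxE.
by case: (j \in bl); rewrite /= ?mulr1n ?mulr0n ?mulr1 ?mulr0.
Qed.

Local Close Scope ring_scope.

Theorem proposition3 (v : nat) (B : {set {set 'I_v}}) :
  (3 < v)%N -> is_STS B ->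
  ~ ((p_rank 2 B < v)%N /\ (p_rank 3 B < v - 1)%N).
Proof.
move=> v3 hS [r2 r3]; rewrite /p_rank in r2 r3.
set M2 := (\sum_(b in B) <<char_vec 2 b>>)%MS in r2.
set M3 := (\sum_(b in B) <<char_vec 3 b>>)%MS in r3.
have rk2 : \rank (kermx M2^T) = v - \rank M2 by rewrite mxrank_ker mxrank_tr.
have rk3 : \rank (kermx M3^T) = v - \rank M3 by rewrite mxrank_ker mxrank_tr.
have : ~~ [forall i, forall j, kermx M2^T i j == 0%R].
  apply/negP => /forallP H.
  have E : kermx M2^T = 0%R.
    apply/matrixP => i j; rewrite [RHS]mxE.
    by have /forallP/(_ j)/eqP := H i.
  by move: rk2; rewrite E mxrank0; lia.
case/forallPn => i2 /forallPn [j0 Hj0].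
have : ~~ [forall i, forall j1, forall j2, kermx M3^T i j1 == kermx M3^T i j2].
  apply/negP => /forallP H.
  have : (kermx M3^T <= (const_mx 1%R : 'rV['F_3]_v))%MS.
    apply/row_subP => k.
    have -> : row k (kermx M3^T) = (kermx M3^T k j0 *: const_mx 1)%R.
      apply/matrixP => a b; rewrite [LHS]mxE [RHS]mxE [X in (_ * X)%R]mxE GRing.mulr1; apply/eqP.
      by have /forallP/(_ j0)/forallP/(_ b) := H k; rewrite eq_sym.
    by apply: scalemx_sub; apply: submx_refl.
  move/mxrankS => le; have := rank_leq_row (const_mx 1%R : 'rV['F_3]_v).
  by lia.
case/forallPn => i3 /forallPn [j1 /forallPn [j2 Hj]].
apply: (@comb v B (fun j => kermx M2^T i2 j) (fun j => kermx M3^T i3 j) j0 j1 j2 v3 hS _ _ Hj0 Hj).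
  by move=> bl bB; apply: ker_sum.
by move=> bl bB; apply: ker_sum.
Qed.
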